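(* Let $k$ be an algebraically closed field of characteristic zero and let $A$ be a standard graded $k$-algebra which is not a principal ideal algebra. Let $r=\operatorname{crit.deg.}(A)$ be its critical degree. Then there exists a surjective $k$-algebra homomorphism $$A\twoheadrightarrow Q(r)=k[X,Y]/\langle X^{r+1},X^rY,Y^2\rangle .$$
   Context: All algebras are commutative, unital and finite dimensional over $k$. A principal ideal algebra is a finite dimensional commutative $k$-algebra in which every ideal is principal. A finite dimensional non-negatively graded algebra $A=A_0\oplus A_1\oplus\cdots\oplus A_n$ is standard if $M=A_1\oplus\cdots\oplus A_n$ is a maximal ideal generated by elements of degree one. For such $A$ not a principal ideal algebra, let $\mathcal{E}$ be the set of $i\in\mathbb{N}$ for which there exist $N\ge0$ and a $k$-algebra homomorphism $\alpha:A\to k[t]/\langle t^{N+1}\rangle$ with $\dim_k\alpha(A_i)\ge2$; this set is finite and nonempty, and the critical degree is $\operatorname{crit.deg.}(A)=\max\mathcal{E}$. *)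

(* Defs.v *)
From HB Require Import structures.
From mathcomp Require Import all_boot all_order all_algebra falgebra.
Set Implicit Arguments. Unset Strict Implicit. Unset Printing Implicit Defensive.
Import Order.TTheory GRing.Theory.
Local Open Scope ring_scope.

Definition in_ideal (R : comNzRingType) (gs : seq R) (p : R) : Prop :=
  exists cs : seq R, size cs = size gs /\ p = \sum_(i < size gs) cs`_i * gs`_i.

Definition congr_mod (R : comNzRingType) (gs : seq R) (p q : R) : Prop :=
  in_ideal gs (p - q).

(* A k-algebra homomorphism  A -> R/<gs>,  represented by a map f : A -> R of
   representatives; emb : k -> R is the structure map of the k-algebra R. *)
Definition quot_hom (k : fieldType) (A : falgType k) (R : comNzRingType)
  (emb : k -> R) (gs : seq R) (f : A -> R) : Prop :=
  [/\ forall (c : k) (x y : A), congr_mod gs (f (c *: x + y)) (emb c * f x + f y),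
      congr_mod gs (f 1) 1
    & forall x y : A, congr_mod gs (f (x * y)) (f x * f y)].

Definition quot_hom_surj (k : fieldType) (A : falgType k) (R : comNzRingType)
  (gs : seq R) (f : A -> R) : Prop :=
  forall p : R, exists a : A, congr_mod gs (f a) p.

Definition is_ideal (k : fieldType) (A : falgType k) (I : {vspace A}) : Prop :=
  forall a x : A, x \in I -> a * x \in I.

Definition is_max_ideal (k : fieldType) (A : falgType k) (I : {vspace A}) : Prop :=
  [/\ is_ideal I, I != fullv &
      forall J : {vspace A}, is_ideal J -> (I <= J)%VS -> J = I \/ J = fullv].

Definition gen_ideal (k : fieldType) (A : falgType k) (s : seq A) (x : A) : Prop :=
  exists cs : seq A, size cs = size s /\ x = \sum_(i < size s) cs`_i * s`_i.

Definition is_principal_ideal_algebra (k : fieldType) (A : falgType k) : Prop :=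
  forall I : {vspace A}, is_ideal I ->
    exists g : A, forall x : A, x \in I <-> exists a : A, x = a * g.

Definition is_grading (k : fieldType) (A : falgType k) (n : nat)
  (G : nat -> {vspace A}) : Prop :=
  [/\ forall i, (n < i)%N -> G i = 0%VS,
      (\sum_(i < n.+1) G i)%VS = fullv,
      directv (\sum_(i < n.+1) G i)%VS
    & forall i j (x y : A), x \in G i -> y \in G j -> x * y \in G (i + j)%N].

Definition irrelevant_ideal (k : fieldType) (A : falgType k) (n : nat)
  (G : nat -> {vspace A}) : {vspace A} :=
  (\sum_(i < n.+1 | (0 < i)%N) G i)%VS.

Definition is_standard_grading (k : fieldType) (A : falgType k) (n : nat)
  (G : nat -> {vspace A}) : Prop :=
  [/\ is_grading n G,
      is_max_ideal (irrelevant_ideal n G)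
    & exists s : seq A, all (fun x => x \in G 1%N) s /\
        forall x : A, x \in irrelevant_ideal n G <-> gen_ideal s x].

(* i is in the set E: there are N and a k-algebra hom alpha : A -> k[t]/<t^(N+1)>
   with dim alpha(A_i) >= 2, i.e. alpha(A_i) contains two linearly independent
   elements. *)
Definition in_E (k : fieldType) (A : falgType k) (G : nat -> {vspace A}) (i : nat)
  : Prop :=
  exists (N : nat) (alpha : A -> {poly k}),
    quot_hom (fun c : k => c%:P) [:: 'X^(N.+1)] alpha /\
    exists a b : A, [/\ a \in G i, b \in G i &
      forall c d : k,
        congr_mod [:: 'X^(N.+1)] (c%:P * alpha a + d%:P * alpha b) 0 ->
        c = 0 /\ d = 0].

Definition is_crit_deg (k : fieldType) (A : falgType k) (G : nat -> {vspace A})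
  (r : nat) : Prop :=
  in_E G r /\ forall i, in_E G i -> (i <= r)%N.

(* Q(r) = k[X,Y]/<X^(r+1), X^r Y, Y^2>, with k[X,Y] = {poly {poly k}},
   X the outer variable 'X and Y the inner variable 'X%:P. *)
Definition QX (k : fieldType) : {poly {poly k}} := 'X.
Definition QY (k : fieldType) : {poly {poly k}} := ('X)%:P.
Definition Q_rels (k : fieldType) (r : nat) : seq {poly {poly k}} :=
  [:: QX k ^+ r.+1; QX k ^+ r * QY k; QY k ^+ 2].

(* Main.v *)
Require Import Defs.
From HB Require Import structures.
From mathcomp Require Import all_boot all_order all_algebra falgebra.
From mathcomp Require Import ring zify.
From Stdlib Require Import Classical.
Set Implicit Arguments. Unset Strict Implicit. Unset Printing Implicit Defensive.
Import GRing.Theory.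
Local Open Scope ring_scope.

Section PolyHelpers.
Variable k : fieldType.

Lemma cm1P N (p q : {poly k}) :
  congr_mod [:: 'X^(N.+1)] p q <-> (forall i, (i <= N)%N -> p`_i = q`_i).
Proof.
split.
  move=> [cs [hs hp]] i hi; apply/eqP; rewrite -subr_eq0 -coefB hp /=.
  by rewrite big_ord1 coefMXn ltnS hi.
move=> h; exists [:: drop_poly N.+1 (p - q)]; split => //.
rewrite big_ord1 /=.
have ht : take_poly N.+1 (p - q) = 0.
  apply/polyP => i; rewrite coef_take_poly coef0 coefB.
  by case: ifP => // hi; rewrite h ?subrr.
by rewrite -{1}(poly_take_drop N.+1 (p - q)) ht add0r.
Qed.

Lemma trunc_mul K o1 o2 (p P q Q : {poly k}) :
  (forall j, (j <= K)%N -> (j < o1)%N -> p`_j = 0 /\ P`_j = 0) ->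
  (forall j, (j <= K)%N -> (j < o2)%N -> q`_j = 0 /\ Q`_j = 0) ->
  (forall j, (j + o2 <= K)%N -> p`_j = P`_j) ->
  (forall j, (j + o1 <= K)%N -> q`_j = Q`_j) ->
  forall i, (i <= K)%N -> (p * q)`_i = (P * Q)`_i.
Proof.
move=> h1 h2 h3 h4 i hi; rewrite !coefM; apply: eq_bigr => [[j hj]] _ /=.
have hji : (j <= i)%N by [].
case: (ltnP j o1) => hjo1.
  by have [-> ->] := h1 j (leq_trans hji hi) hjo1; rewrite !mul0r.
case: (ltnP (i - j)%N o2) => hjo2.
  have [-> ->] := h2 (i - j)%N (leq_trans (leq_subr _ _) hi) hjo2; by rewrite !mulr0.
rewrite h3 ?h4 //.
  by lia.
by lia.
Qed.

End PolyHelpers.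

Section QHelpers.
Variables (k : fieldType) (r : nat).
Local Notation R := {poly {poly k}}.
Local Notation I := (in_ideal (Q_rels k r)).

Lemma inQP (p : R) : I p <-> exists c1 c2 c3,
  p = c1 * QX k ^+ r.+1 + c2 * (QX k ^+ r * QY k) + c3 * QY k ^+ 2.
Proof.
split.
  move=> [cs [hs ->]]; rewrite /= !big_ord_recl big_ord0 addr0 /=.
  by exists cs`_0, cs`_1, cs`_2; rewrite addrA.
move=> [c1 [c2 [c3 ->]]]; exists [:: c1; c2; c3]; split => //.
by rewrite /= !big_ord_recl big_ord0 addr0 /= addrA.
Qed.

Lemma inQ0 : I 0.
Proof. by apply/inQP; exists 0, 0, 0; rewrite !mul0r !addr0. Qed.

Lemma inQD p q : I p -> I q -> I (p + q).
Proof.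
move=> /inQP[a1 [a2 [a3 ->]]] /inQP[b1 [b2 [b3 ->]]].
apply/inQP; exists (a1 + b1), (a2 + b2), (a3 + b3); ring.
Qed.

Lemma inQM p q : I q -> I (p * q).
Proof.
move=> /inQP[a1 [a2 [a3 ->]]].
apply/inQP; exists (p * a1), (p * a2), (p * a3); ring.
Qed.

Lemma inQN p : I p -> I (- p).
Proof. by move=> h; rewrite -mulN1r; apply: inQM. Qed.

Lemma inQ_sum (J : finType) (F : J -> R) : (forall j, I (F j)) -> I (\sum_j F j).
Proof.
move=> h; elim/big_rec: _ => [|j x _ hx]; first exact: inQ0.
exact: inQD.
Qed.

Lemma cQ_refl p : congr_mod (Q_rels k r) p p.
Proof. by rewrite /congr_mod subrr; exact: inQ0. Qed.

Lemma cQ_eq p q : p = q -> congr_mod (Q_rels k r) p q.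
Proof. by move=> ->; exact: cQ_refl. Qed.

Lemma cQ_trans p q s : congr_mod (Q_rels k r) p q -> congr_mod (Q_rels k r) q s ->
  congr_mod (Q_rels k r) p s.
Proof.
rewrite /congr_mod => h1 h2.
by have := inQD h1 h2; rewrite addrA subrK.
Qed.

Lemma cQ_sym p q : congr_mod (Q_rels k r) p q -> congr_mod (Q_rels k r) q p.
Proof. by rewrite /congr_mod => /inQN; rewrite opprB. Qed.

Lemma cQ_add p q p' q' : congr_mod (Q_rels k r) p q -> congr_mod (Q_rels k r) p' q' ->
  congr_mod (Q_rels k r) (p + p') (q + q').
Proof.
rewrite /congr_mod => h1 h2.
by have := inQD h1 h2; rewrite opprD addrACA.
Qed.

Lemma cQ_mul p q p' q' : congr_mod (Q_rels k r) p q -> congr_mod (Q_rels k r) p' q' ->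
  congr_mod (Q_rels k r) (p * p') (q * q').
Proof.
rewrite /congr_mod => h1 h2.
have := inQD (inQM p' h1) (inQM q h2).
by have -> : p' * (p - q) + q * (p' - q') = p * p' - q * q' by ring.
Qed.

Lemma cQ_sum (J : finType) (F F' : J -> R) : (forall j, congr_mod (Q_rels k r) (F j) (F' j)) ->
  congr_mod (Q_rels k r) (\sum_j F j) (\sum_j F' j).
Proof.
move=> h; rewrite /congr_mod -sumrB; apply: inQ_sum => j; exact: h.
Qed.

End QHelpers.

Section Grading.
Variables (k : fieldType) (A : falgType k) (n : nat) (G : nat -> {vspace A}).
Hypothesis hgr : is_grading n G.

Definition piL (e : nat) : 'End(A) :=
  if (e < n.+1)%N then sumv_pi (\sum_(i < n.+1) G i)%VS (inord e) else 0%VF.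
Definition pi e (x : A) := piL e x.

Lemma pi_lin e c x y : pi e (c *: x + y) = c *: pi e x + pi e y.
Proof. by rewrite /pi linearP. Qed.

Lemma pi0 e : pi e 0 = 0.
Proof. by rewrite /pi linear0. Qed.

Lemma piD e x y : pi e (x + y) = pi e x + pi e y.
Proof. by rewrite /pi linearD. Qed.

Lemma piZ e c x : pi e (c *: x) = c *: pi e x.
Proof. by rewrite /pi linearZ. Qed.

Lemma pi_sumr e (J : finType) (F : J -> A) : pi e (\sum_j F j) = \sum_j pi e (F j).
Proof. by rewrite /pi linear_sum. Qed.

Lemma pi_out e x : (n < e)%N -> pi e x = 0.
Proof. by move=> he; rewrite /pi /piL ltnS leqNgt he /= lfunE. Qed.

Lemma pi_mem e x : pi e x \in G e.
Proof.
rewrite /pi /piL; case: ifP => he.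
  by have := memv_sum_pi (erefl (\sum_(i < n.+1) G i)%VS) (inord e) x; rewrite inordK.
by rewrite lfunE mem0v.
Qed.

Lemma pi_sum x : x = \sum_(i < n.+1) pi i x.
Proof.
have [_ hf _ _] := hgr.
have hx : x \in (\sum_(i < n.+1) G i)%VS by rewrite hf memvf.
rewrite -{1}(sumv_pi_sum (erefl (\sum_(i < n.+1) G i)%VS) hx).
apply: eq_bigr => i _; rewrite /pi /piL ltn_ord; congr (sumv_pi _ _ x).
by apply: val_inj; rewrite /= inordK.
Qed.

Lemma pi_uniq (us : nat -> A) : (forall i, (i < n.+1)%N -> us i \in G i) ->
  forall i, (i < n.+1)%N -> pi i (\sum_(j < n.+1) us j) = us i.
Proof.
have [_ _ hd _] := hgr.
move=> hus i hi; set x := \sum_(j < n.+1) us j.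
have := (directv_sum_unique hd) (fun j : 'I_n.+1 => pi j x) (fun j : 'I_n.+1 => us j).
move=> /(_ (fun j _ => pi_mem j x) (fun j _ => hus j (ltn_ord j))).
rewrite -pi_sum eqxx => /esym /forall_inP /(_ (Ordinal hi) isT) /eqP.
done.
Qed.

Lemma pi_hom d x e : x \in G d -> pi e x = if e == d then x else 0.
Proof.
have [h0 _ _ _] := hgr.
move=> hx; case: (ltnP n d) => hd.
  move: hx; rewrite h0 // memv0 => /eqP ->; rewrite pi0; by case: ifP.
have hs : x = \sum_(j < n.+1) (if (j : nat) == d then x else 0).
  rewrite (bigD1 (Ordinal (hd : (d < n.+1)%N))) //= eqxx big1 ?addr0 // => j hj.
  by case: eqP => // hjd; move: hj; rewrite -(inj_eq val_inj) /= hjd eqxx.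
case: (ltnP n e) => he.
  rewrite pi_out //; case: eqP => // hed; subst; by rewrite ltnNge hd in he.
rewrite {1}hs (pi_uniq (us := fun j => if j == d then x else 0)) //.
by move=> j _; case: eqP => [->|]; rewrite ?hx ?mem0v.
Qed.

Lemma pi_id d x : x \in G d -> pi d x = x.
Proof. by move=> h; rewrite (pi_hom _ h) eqxx. Qed.

Lemma pi_ne d x e : x \in G d -> e != d -> pi e x = 0.
Proof. by move=> h /negbTE hne; rewrite (pi_hom _ h) hne. Qed.

Lemma G_mul i j x y : x \in G i -> y \in G j -> x * y \in G (i + j).
Proof. by have [_ _ _ hm] := hgr; apply: hm. Qed.

Definition ge j (x : A) := forall i, (i < j)%N -> pi i x = 0.

Lemma ge_mul j x y : ge j x -> ge 1 y -> ge j.+1 (x * y).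
Proof.
move=> hx hy e he.
rewrite (pi_sum x) (pi_sum y) mulr_suml pi_sumr big1 // => i _.
rewrite mulr_sumr pi_sumr big1 // => i' _.
case: (ltnP i j) => hij; first by rewrite hx // mul0r pi0.
case: (ltnP i' 1) => hi'; first by rewrite hy // mulr0 pi0.
apply: (pi_ne (G_mul (pi_mem i x) (pi_mem i' y))).
apply/eqP => heq; move: he; rewrite heq; lia.
Qed.

Lemma ge_nil x : ge n.+1 x -> x = 0.
Proof.
by move=> hx; rewrite (pi_sum x) big1 // => i _; rewrite hx.
Qed.

Lemma ge_pow m : ge 1 m -> forall j, ge j (m ^+ j).
Proof.
move=> hm; elim=> [|j ih]; first by move=> i.
rewrite exprSr; exact: ge_mul.
Qed.

Lemma ge_nilpotent m : ge 1 m -> m ^+ n.+1 = 0.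
Proof. by move=> hm; apply: ge_nil; apply: ge_pow. Qed.

Lemma irrP m : m \in irrelevant_ideal n G <-> pi 0 m = 0.
Proof.
split.
  move=> /memv_sumP [us hus ->].
  have -> : \sum_(i < n.+1 | (0 < i)%N) us i =
            \sum_(i < n.+1) (if (0 < i)%N then us (inord i) else 0).
    rewrite big_mkcond; apply: eq_bigr => i _; case: ifP => // _.
    by congr (us _); apply: val_inj; rewrite /= inordK.
  rewrite (pi_uniq (us := fun i => if (0 < i)%N then us (inord i) else 0)) //.
  move=> i hi; case: ifP => hi0; last exact: mem0v.
  by have := hus (inord i); rewrite inordK //; apply.
move=> h; rewrite (pi_sum m) /irrelevant_ideal.
have -> : \sum_(i < n.+1) pi i m = \sum_(i < n.+1 | (0 < i)%N) pi i m.
  rewrite [RHS]big_mkcond; apply: eq_bigr => i _; case: ifP => //.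
  by move=> /negbT; rewrite lt0n negbK => /eqP ->.
by apply: memv_sumr => i _; apply: pi_mem.
Qed.

Lemma piB e x y : pi e (x - y) = pi e x - pi e y.
Proof. by rewrite /pi linearB. Qed.

Lemma one_G0 : (1 : A) \in G 0.
Proof.
set e := pi 0 1.
have he : e \in G 0 by apply: pi_mem.
have hm : ge 1 (1 - e).
  by move=> i; rewrite ltnS leqn0 => /eqP ->; rewrite piB (pi_id he) subrr.
have hee : e * e = e.
  have h1 : e * (1 - e) \in G 0 by rewrite mulrBr mulr1 memvB // (G_mul he he).
  have h2 : ge 1 (e * (1 - e)) by apply: ge_mul => // i.
  have := h2 0 isT; rewrite (pi_id h1) mulrBr mulr1 => /eqP; rewrite subr_eq0.
  by move/eqP.
have hmm : (1 - e) * (1 - e) = 1 - e.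
  by rewrite mulrBl mul1r mulrBr mulr1 hee subrr subr0.
have hp : forall j, (1 - e) ^+ j.+1 = 1 - e.
  by elim=> [|j ih]; rewrite ?expr1 // exprSr ih hmm.
have := ge_nilpotent hm; rewrite hp => /eqP; rewrite subr_eq0 => /eqP ->.
exact: he.
Qed.

Lemma mul_shift d c s : s \in G 1 -> pi d.+1 (c * s) = pi d c * s.
Proof.
move=> hs; rewrite {1}(pi_sum c) mulr_suml pi_sumr.
have hterm : forall i : 'I_n.+1, pi d.+1 (pi i c * s) =
    if (i : nat) == d then pi i c * s else 0.
  move=> i; rewrite (pi_hom _ (G_mul (pi_mem i c) hs)) addn1 eqSS.
  by rewrite eq_sym.
rewrite (eq_bigr _ (fun i _ => hterm i)).
case: (ltnP d n.+1) => hd.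
  rewrite (bigD1 (Ordinal hd)) //= eqxx big1 ?addr0 // => j hj.
  by case: eqP => // hjd; move: hj; rewrite -(inj_eq val_inj) /= hjd eqxx.
rewrite pi_out // mul0r.
by rewrite big1 // => i _; case: eqP => // hid; move: (ltn_ord i); rewrite hid ltnNge hd.
Qed.

Lemma grade_ind (s : seq A) (hs : all (fun x => x \in G 1) s)
  (hgen : forall x, x \in irrelevant_ideal n G -> gen_ideal s x)
  (Q : nat -> A -> Prop) (Q0 : forall d, Q d 0)
  (QD : forall d x y, Q d x -> Q d y -> Q d (x + y))
  (Q1 : forall y, y \in G 1 -> Q 1 y)
  (QM : forall d x y, (0 < d)%N -> x \in G d -> y \in G 1 -> Q d x -> Q d.+1 (x * y)) :
  forall d, (0 < d)%N -> forall x, x \in G d -> Q d x.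
Proof.
elim=> [//|d ih] _ x hx.
case: (posnP d) => [hd0|hd]; first by subst; exact: Q1.
have hirr : x \in irrelevant_ideal n G by apply/irrP; rewrite (pi_ne hx).
have [cs [hcs hxe]] := hgen x hirr.
rewrite -(pi_id hx) hxe pi_sumr.
elim/big_rec: _ => [|i y _ hy]; first exact: Q0.
apply: QD => //.
have hsi : s`_i \in G 1 by move/(all_nthP 0): hs; apply.
rewrite mul_shift //; apply: QM => //; first exact: pi_mem.
by apply: ih => //; apply: pi_mem.
Qed.

End Grading.

Section Closed.
Variables (k : closedFieldType) (A : falgType k) (n : nat) (G : nat -> {vspace A}).
Hypothesis hgr : is_grading n G.
Hypothesis hcomm : forall x y : A, x * y = y * x.
Hypothesis hmax : is_max_ideal (irrelevant_ideal n G).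

Lemma G0_unit_or_0 w : w \in G 0 -> w = 0 \/ exists y, w * y = 1.
Proof.
move=> hw.
have [hid _ hmx] := hmax.
set M := irrelevant_ideal n G.
set J := (M + limg (amull w))%VS.
have hJ : is_ideal J.
  move=> a x /memv_addP [m hm [u hu ->]].
  rewrite mulrDr; apply: memv_add; first exact: hid.
  move/memv_imgP: hu => [v _ ->]; rewrite lfunE /= mulrA (hcomm a w) -mulrA.
  have -> : w * (a * v) = amull w (a * v) by rewrite lfunE.
  by apply: memv_img; apply: memvf.
have hwJ : w \in J.
  apply/memv_addP; exists 0; first exact: mem0v.
  by exists (amull w 1); [apply: memv_img; apply: memvf | rewrite lfunE /= mulr1 add0r].
case: (hmx J hJ (addvSl _ _)) => hJM.
  left; move: hwJ; rewrite hJM => /(irrP hgr); by rewrite (pi_id hgr hw).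
right.
have : (1 : A) \in J by rewrite hJM memvf.
move=> /memv_addP [m hm [u /memv_imgP [v _ ->] h1]].
rewrite lfunE /= in h1.
have hm1 : ge n G 1 m by move=> i; rewrite ltnS leqn0 => /eqP ->; apply/(irrP hgr).
have hnil := ge_nilpotent hgr hm1.
exists (v * \sum_(i < n.+1) m ^+ i).
have : (1 - m) * \sum_(i < n.+1) m ^+ i = 1.
  apply/eqP; rewrite -opprB mulNr -subrX1 hnil sub0r opprK.
  by [].
by rewrite mulrA; move=> <-; congr (_ * _); rewrite h1 addrC addKr.
Qed.

Lemma prod_rinv (z : A) (s : seq k) :
  (forall c, c \in s -> exists y, (z - c%:A) * y = 1) ->
  exists y, (\prod_(c <- s) (z - c%:A)) * y = 1.
Proof.
elim: s => [|c s ih] h; first by exists 1; rewrite big_nil mulr1.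
have [y1 hy1] := h c (mem_head _ _).
have [y2 hy2] := ih (fun c' hc' => h c' ltac:(by rewrite inE hc' orbT)).
exists (y2 * y1); rewrite big_cons -mulrA (mulrA _ y2) hy2 mul1r //.
Qed.

Lemma G0_scalar z : z \in G 0 -> exists c : k, z = c%:A.
Proof.
move=> hz.
set D := \dim (fullv : {vspace A}).
pose X := [tuple z ^+ i | i < D.+1].
have hnf : ~~ free X.
  rewrite /free size_tuple; apply/negP => /eqP hd.
  have := dimvS (subvf <<X>>%VS); rewrite hd -/D; by rewrite ltnn.
have [kk [hsum [i hi]]] : exists kk : 'I_D.+1 -> k,
    \sum_(i < D.+1) kk i *: X`_i = 0 /\ exists i, kk i != 0.
  apply: NNPP => hne; apply: (negP hnf); apply/freeP => kk hs i.
  apply: NNPP => hki; apply: hne; exists kk; split => //; exists i.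
  by apply/eqP.
pose p : {poly k} := \poly_(i < D.+1) kk (inord i).
have hp0 : p != 0.
  apply/eqP => /polyP /(_ i); rewrite coef_poly ltn_ord coef0 /=.
  have -> : inord i = i by apply: val_inj; rewrite /= inordK.
  by move/eqP; rewrite (negbTE hi).
have hpz : horner_alg z p = 0.
  rewrite /p poly_def linear_sum /= -[RHS]hsum; apply: eq_bigr => j _.
  rewrite linearZ /= rmorphXn /= horner_algX.
  have -> : inord j = j by apply: val_inj; rewrite /= inordK.
  by rewrite (nth_mktuple (fun i : 'I_D.+1 => z ^+ i)) mulr_algl.
have [rs hrs] := closed_field_poly_normal p.
move: hpz; rewrite hrs linearZ /= rmorph_prod /=.
have hf : forall c, horner_alg z ('X - c%:P) = z - c%:A.
  by move=> c; rewrite rmorphB /= horner_algX horner_algC.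
under eq_bigr do rewrite hf.
move=> hprod.
apply: NNPP => hno.
have hall : forall c, c \in rs -> exists y, (z - c%:A) * y = 1.
  move=> c _; have hw : z - c%:A \in G 0.
    apply: memvB => //; apply: memvZ; exact: (one_G0 hgr).
  case: (G0_unit_or_0 hw) => // /eqP; rewrite subr_eq0 => /eqP hzc.
  by exfalso; apply: hno; exists c.
have [y hy] := prod_rinv hall.
have : ((lead_coef p)%:A * \prod_(c <- rs) (z - c%:A)) * y = 0 by rewrite hprod mul0r.
rewrite -mulrA hy mulr1 => /eqP; rewrite scaler_eq0 oner_eq0 orbF lead_coef_eq0.
by rewrite (negbTE hp0).
Qed.

End Closed.

Section Alpha.
Variables (k : fieldType) (A : falgType k) (n : nat) (G : nat -> {vspace A}).
Hypothesis hgr : is_grading n G.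
Variables (s : seq A).
Hypothesis hs : all (fun x => x \in G 1) s.
Hypothesis hgen : forall x, x \in irrelevant_ideal n G -> gen_ideal s x.
Variables (N : nat) (al : A -> {poly k}).
Hypothesis hlin : forall c x y i, (i <= N)%N -> (al (c *: x + y))`_i = c * (al x)`_i + (al y)`_i.
Hypothesis hmul : forall x y i, (i <= N)%N -> (al (x * y))`_i = (al x * al y)`_i.

Lemma al0 i : (i <= N)%N -> (al 0)`_i = 0.
Proof.
move=> hi; have := hlin 1 0 0 hi; rewrite scale1r addr0 mul1r => h.
by apply: (@addrI _ (al 0)`_i); rewrite -h addr0.
Qed.

Lemma alD x y i : (i <= N)%N -> (al (x + y))`_i = (al x)`_i + (al y)`_i.
Proof. by move=> hi; rewrite -{1}[x]scale1r hlin // mul1r. Qed.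

Lemma alZ c x i : (i <= N)%N -> (al (c *: x))`_i = c * (al x)`_i.
Proof. by move=> hi; rewrite -[c *: x]addr0 hlin // al0 // addr0. Qed.

Variables (a b : nat) (x0 : A).
Hypothesis hx0 : x0 \in G 1.
Hypothesis ha : (a <= N)%N.
Hypothesis hW : (al x0)`_a != 0.
Hypothesis hlow : forall y, y \in G 1 -> forall i, (i < a)%N -> (al y)`_i = 0.
Hypothesis hb : (0 < b)%N.
Hypothesis hgood : forall y, y \in G 1 -> exists l, forall i, (i <= N)%N -> (i < a + b)%N ->
   (al y)`_i = l * (al x0)`_i.

Definition W := al x0.
Definition V := drop_poly a W.
Definition E d l m := 'X^(d * a) * V ^+ d * (l%:P + m%:P * 'X^b).

Lemma XaV : 'X^a * V = W.
Proof.
apply/polyP => i; rewrite coefXnM; case: ifP => hi.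
  by rewrite /W hlow.
by rewrite coef_drop_poly subnK // leqNgt hi.
Qed.

Lemma V0 : V`_0 = W`_a.
Proof. by rewrite coef_drop_poly add0n. Qed.

Lemma V0_neq0 : V`_0 != 0.
Proof. by rewrite V0. Qed.

Lemma coef0_exp (p : {poly k}) d : (p ^+ d)`_0 = p`_0 ^+ d.
Proof.
elim: d => [|d ih]; first by rewrite !expr0 coef1.
by rewrite !exprS coef0M ih.
Qed.

Lemma E_low d l m i : (i < d * a)%N -> (E d l m)`_i = 0.
Proof. by move=> hi; rewrite /E -mulrA coefXnM hi. Qed.

Lemma E_coef0 d l m : (E d l m)`_(d * a) = V`_0 ^+ d * l.
Proof.
rewrite /E -mulrA coefXnM ltnn subnn coef0M coef0_exp coefD coefC /=.
by rewrite coef0M coefC coefXn /= eq_sym (negbTE (lt0n_neq0 hb)) mulr0 addr0.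
Qed.

Lemma E_coefb d l m : (E d l m)`_(d * a + b) = (V ^+ d)`_b * l + V`_0 ^+ d * m.
Proof.
rewrite /E -mulrA coefXnM ltnNge leq_addr /= addKn mulrDr coefD.
rewrite coefMC mulrA coefMXn ltnn subnn coefMC coef0_exp.
by rewrite mulrC.
Qed.

Lemma E_small d l m i : (i < d * a + b)%N -> (E d l m)`_i = l * ('X^(d * a) * V ^+ d)`_i.
Proof.
move=> hi; rewrite /E mulrDr coefD coefMC mulrC.
have -> : 'X^(d * a) * V ^+ d * (m%:P * 'X^b) = 'X^(d * a) * (V ^+ d * m%:P) * 'X^b.
  by rewrite !mulrA.
rewrite coefMXn; case: ifP => hib; first by rewrite addr0.
rewrite [X in _ + X]coefXnM ifT ?addr0 //.
by move/negbT: hib; lia.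
Qed.

Definition lam d x := (al x)`_(d * a) / V`_0 ^+ d.
Definition mu d x := ((al x)`_(d * a + b) - lam d x * (V ^+ d)`_b) / V`_0 ^+ d.

Definition rep d x l m := forall i, (i <= N)%N -> (i <= d * a + b)%N -> (al x)`_i = (E d l m)`_i.

Lemma rep_unique d x l m : (d * a + b <= N)%N -> rep d x l m -> lam d x = l /\ mu d x = m.
Proof.
move=> hN hr.
have hv : V`_0 ^+ d != 0 by rewrite expf_neq0 // V0_neq0.
have hl : lam d x = l.
  rewrite /lam hr ?E_coef0 //; last by rewrite leq_addr.
    by rewrite mulrC mulKf.
  by apply: leq_trans hN; rewrite leq_addr.
split => //; rewrite /mu hr // E_coefb hl.
by rewrite (mulrC l) addrAC subrr add0r mulrC mulKf.
Qed.

Lemma lam_lin d c x y : (d * a <= N)%N -> lam d (c *: x + y) = c * lam d x + lam d y.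
Proof. by move=> hN; rewrite /lam hlin // mulrDl mulrA. Qed.

Lemma mu_lin d c x y : (d * a + b <= N)%N -> mu d (c *: x + y) = c * mu d x + mu d y.
Proof.
move=> hN; have hN' : (d * a <= N)%N by apply: leq_trans hN; rewrite leq_addr.
rewrite /mu lam_lin // hlin //; ring.
Qed.

Lemma E_mul d e l1 m1 l2 m2 : E d l1 m1 * E e l2 m2 =
  E (d + e) (l1 * l2) (l1 * m2 + m1 * l2) +
  'X^((d + e) * a + b) * (V ^+ (d + e) * (m1 * m2)%:P * 'X^b).
Proof.
rewrite /E mulnDl !exprD !polyCD !polyCM; ring.
Qed.

Lemma rep_mul d e (p q pq : {poly k}) l1 m1 l2 m2 :
  (forall i, (i <= N)%N -> (i <= d * a + b)%N -> p`_i = (E d l1 m1)`_i) ->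
  (forall i, (i <= N)%N -> (i <= e * a + b)%N -> q`_i = (E e l2 m2)`_i) ->
  (forall i, (i <= N)%N -> pq`_i = (p * q)`_i) ->
  forall i, (i <= N)%N -> (i <= (d + e) * a + b)%N ->
    pq`_i = (E (d + e) (l1 * l2) (l1 * m2 + m1 * l2))`_i.
Proof.
move=> hp hq hpq i hiN hi.
have hK : (i <= minn N ((d + e) * a + b))%N by rewrite leq_min hiN hi.
rewrite hpq // (trunc_mul (o1 := d * a) (o2 := e * a) (P := E d l1 m1) (Q := E e l2 m2) _ _ _ _ hK).
- rewrite E_mul coefD [X in _ + X]coefXnM; case: ifP => _; first by rewrite addr0.
  rewrite coefMXn; have -> : (i - ((d + e) * a + b) < b)%N by lia.
  by rewrite addr0.
- move=> j hj hjo; rewrite E_low // hp //; try lia.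
  by rewrite E_low.
- move=> j hj hjo; rewrite E_low // hq //; try lia.
  by rewrite E_low.
- move=> j hj; apply: hp; lia.
- move=> j hj; apply: hq; lia.
Qed.

Lemma rep_one y : y \in G 1 -> exists l m, rep 1 y l m.
Proof.
move=> hy; have [l hl] := hgood hy.
exists l, (((al y)`_(a + b) - l * W`_(a + b)) / W`_a) => i hiN hi.
rewrite /E mul1n expr1 XaV mulrDr coefD coefMC mulrA coefMXn coefMC.
move: hi; rewrite mul1n leq_eqVlt => /orP [/eqP ->|hi].
  rewrite ltnNge leq_addl /= addnK [W`_a * _]mulrC divfK //.
  by rewrite mulrC addrC subrK.
rewrite hl // mulrC; case: ifP => hib; first by rewrite addr0.
move/negbT: hib => hib; rewrite /W (hlow hx0 (i := (i - b)%N)) ?mul0r ?addr0 //; lia.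
Qed.

Lemma KL d : (0 < d)%N -> forall x, x \in G d -> exists l m, rep d x l m.
Proof.
apply: (grade_ind hgr hs hgen (Q := fun d x => exists l m, rep d x l m)).
- move=> d0; exists 0, 0 => i hiN _; rewrite al0 // /E polyC0 mul0r addr0 mulr0.
  by rewrite coef0.
- move=> d0 x y [l1 [m1 h1]] [l2 [m2 h2]]; exists (l1 + l2), (m1 + m2) => i hiN hi.
  have -> : E d0 (l1 + l2) (m1 + m2) = E d0 l1 m1 + E d0 l2 m2 by rewrite /E !polyCD; ring.
  by rewrite alD // h1 // h2 // coefD.
- exact: rep_one.
- move=> d0 x y hd0 hx hy [l1 [m1 h1]].
  have [l2 [m2 h2]] := rep_one hy.
  exists (l1 * l2), (l1 * m2 + m1 * l2) => i hiN hi.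
  rewrite -addn1; apply: (rep_mul h1 h2) => //; last by rewrite addn1.
  by move=> j hj; apply: hmul.
Qed.

Lemma KL' d x : (d * a + b <= N)%N -> (0 < d)%N -> x \in G d -> rep d x (lam d x) (mu d x).
Proof.
move=> hN hd hx; have [l [m h]] := KL hd hx.
by have [-> ->] := rep_unique hN h.
Qed.

Variable r : nat.
Hypothesis hr1 : (0 < r)%N.
Hypothesis hrN : (r * a + b <= N)%N.
Hypothesis hone : forall i, (i <= N)%N -> (al 1)`_i = (1 : {poly k})`_i.
Hypothesis hG0 : forall z, z \in G 0 -> exists c : k, z = c%:A.
Hypothesis hcomm : forall x y : A, x * y = y * x.

Local Notation R := {poly {poly k}}.
Local Notation cQ := (congr_mod (Q_rels k r)).

Definition psi d (z : A) : R :=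
  (lam d z)%:P%:P * QX k ^+ d + (mu d z)%:P%:P * (QX k ^+ d.-1 * QY k).

Definition phi x := \sum_(d < r.+1) psi d (pi n G d x).

Lemma dN d : (d <= r)%N -> (d * a + b <= N)%N.
Proof. by move=> hd; apply: leq_trans hrN; rewrite leq_add2r leq_mul2r hd orbT. Qed.

Lemma dN' d : (d <= r)%N -> (d * a <= N)%N.
Proof. by move=> hd; apply: leq_trans (dN hd); rewrite leq_addr. Qed.

Lemma psi_lin d c x y : (d <= r)%N -> psi d (c *: x + y) = c%:P%:P * psi d x + psi d y.
Proof.
move=> hd; rewrite /psi lam_lin ?dN' // mu_lin ?dN // !polyCD !polyCM; ring.
Qed.

Lemma phi_lin c x y : phi (c *: x + y) = c%:P%:P * phi x + phi y.
Proof.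
rewrite /phi mulr_sumr -big_split /=; apply: eq_bigr => i _.
by rewrite pi_lin psi_lin // -ltnS.
Qed.

Lemma phi0 : phi 0 = 0.
Proof.
have := phi_lin 1 0 0; rewrite scale1r addr0 mul1r => h.
by apply: (@addrI _ (phi 0)); rewrite -h addr0.
Qed.

Lemma phiD x y : phi (x + y) = phi x + phi y.
Proof. by rewrite -{1}[x]scale1r phi_lin mul1r. Qed.

Lemma phiZ c x : phi (c *: x) = c%:P%:P * phi x.
Proof. by rewrite -[c *: x]addr0 phi_lin phi0 addr0. Qed.

Lemma phi_sum (J : finType) (F : J -> A) : phi (\sum_j F j) = \sum_j phi (F j).
Proof. exact: (big_morph phi phiD phi0). Qed.

Lemma psi0 d : (d <= r)%N -> psi d 0 = 0.
Proof.
move=> hd; have := psi_lin 1 0 0 hd; rewrite scale1r addr0 mul1r => h.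
by apply: (@addrI _ (psi d 0)); rewrite -h addr0.
Qed.

Lemma phi_hom d x : x \in G d -> phi x = if (d <= r)%N then psi d x else 0.
Proof.
move=> hx; rewrite /phi.
have h : forall j : 'I_r.+1, psi j (pi n G j x) = if (j : nat) == d then psi d x else 0.
  move=> j; rewrite (pi_hom hgr _ hx); case: eqP => [->|_] //.
  by rewrite psi0 // -ltnS.
rewrite (eq_bigr _ (fun j _ => h j)); case: ifP => hd.
  rewrite (bigD1 (Ordinal (hd : (d < r.+1)%N))) //= eqxx big1 ?addr0 // => j hj.
  by case: eqP => // hjd; move: hj; rewrite -(inj_eq val_inj) /= hjd eqxx.
rewrite big1 // => j _; case: eqP => // hjd; move: (ltn_ord j); rewrite hjd ltnS hd.
by [].
Qed.

Lemma psi0_scal c : psi 0 (c%:A) = c%:P%:P.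
Proof.
have hb' : (b <= N)%N by apply: leq_trans hrN; rewrite leq_addl.
rewrite /psi /mu /lam !mul0n add0n !expr0 !divr1 alZ // alZ // !hone //.
rewrite coef1 coef1 eqxx mulr1 (negbTE (lt0n_neq0 hb)) /= !mulr0 subrr.
by rewrite mulr1 !polyC0 mul0r addr0.
Qed.

Lemma scal_G0 c : c%:A \in G 0.
Proof. by apply: memvZ; exact: (one_G0 hgr). Qed.

Lemma phi_scal c : phi (c%:A) = c%:P%:P.
Proof. by rewrite (phi_hom (scal_G0 c)) psi0_scal. Qed.

Lemma phi_one : phi 1 = 1.
Proof. by have := phi_scal 1; rewrite scale1r. Qed.

Lemma mul_G0 x y : x \in G 0 -> phi (x * y) = phi x * phi y.
Proof.
move=> /hG0 [c ->]; rewrite mulr_algl phiZ phi_scal //.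
Qed.

Lemma mul_hom d e x y : x \in G d -> y \in G e -> cQ (phi (x * y)) (phi x * phi y).
Proof.
move=> hx hy.
case: d hx => [|d'] hx; first by apply: cQ_eq; apply: mul_G0.
case: e hy => [|e'] hy.
  by apply: cQ_eq; rewrite hcomm mulrC; apply: mul_G0.
have hxy := G_mul hgr hx hy.
rewrite (phi_hom hxy) (phi_hom hx) (phi_hom hy).
case: (leqP (d'.+1 + e'.+1) r) => hde.
  have hd : (d'.+1 <= r)%N by lia.
  have he : (e'.+1 <= r)%N by lia.
  rewrite hd he.
  have rx := KL' (dN hd) isT hx.
  have ry := KL' (dN he) isT hy.
  have rxy := rep_mul rx ry (fun i hi => hmul x y hi).
  have [hl hm] := rep_unique (dN hde) rxy.
  rewrite /congr_mod /psi hl hm; apply/inQP.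
  exists 0, 0, (-((mu d'.+1 x * mu e'.+1 y)%:P%:P * QX k ^+ d' * QX k ^+ e')).
  have -> : (d'.+1 + e'.+1).-1 = (d' + e').+1 by rewrite addnS addSn.
  rewrite /= !exprS !exprD !exprS !polyCD !polyCM; ring.
case: (leqP d'.+1 r) => hd; last by rewrite mul0r; apply: cQ_refl.
case: (leqP e'.+1 r) => he; last by rewrite mulr0; apply: cQ_refl.
rewrite /congr_mod sub0r /psi /=.
set t := (d' + e'.+1 - r)%N.
have ht : (d' + e'.+1 = r + t)%N by rewrite /t; lia.
set L1 := (lam d'.+1 x)%:P%:P; set L2 := (lam e'.+1 y)%:P%:P.
set M1 := (mu d'.+1 x)%:P%:P; set M2 := (mu e'.+1 y)%:P%:P.
apply/inQP.
exists (-(L1 * L2 * QX k ^+ t)), (-((L1 * M2 + M1 * L2) * QX k ^+ t)),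
  (-(M1 * M2 * QX k ^+ d' * QX k ^+ e')).
have hX : QX k ^+ d' * QX k ^+ e' * QX k = QX k ^+ r * QX k ^+ t.
  by rewrite -exprD -exprSr -addnS ht exprD.
apply/eqP; rewrite -subr_eq0; apply/eqP.
rewrite !exprS.
transitivity ((QX k ^+ d' * QX k ^+ e' * QX k - QX k ^+ r * QX k ^+ t) *
   (-(L1 * L2 * QX k + (L1 * M2 + M1 * L2) * QY k))); first by ring.
by rewrite hX subrr mul0r.
Qed.

Lemma phi_pisum y : phi y = \sum_(i < n.+1) phi (pi n G i y).
Proof. by rewrite {1}(pi_sum hgr y) phi_sum. Qed.

Lemma mul_homl d x y : x \in G d -> cQ (phi (x * y)) (phi x * phi y).
Proof.
move=> hx; rewrite (phi_pisum y) {1}(pi_sum hgr y) mulr_sumr phi_sum mulr_sumr.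
by apply: cQ_sum => i; apply: (mul_hom hx (pi_mem n G i y)).
Qed.

Lemma phi_mul x y : cQ (phi (x * y)) (phi x * phi y).
Proof.
rewrite (phi_pisum x) {1}(pi_sum hgr x) mulr_suml phi_sum mulr_suml.
by apply: cQ_sum => i; apply: (mul_homl y (pi_mem n G i x)).
Qed.

Lemma phi_x0 : phi x0 = QX k.
Proof.
have hl : lam 1 x0 = 1 by rewrite /lam mul1n expr1 V0 divff.
have hV : V`_b = (al x0)`_(a + b) by rewrite coef_drop_poly addnC.
have hm : mu 1 x0 = 0 by rewrite /mu hl mul1r expr1 hV mul1n subrr mul0r.
rewrite (phi_hom hx0) hr1 /psi hl hm expr1 /= expr0.
by rewrite !polyC0 mul0r addr0 !polyC1 mul1r.
Qed.

Variable y1 : A.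
Hypothesis hy1 : y1 \in G 1.
Hypothesis hm1 : mu 1 y1 != 0.

Lemma phi_y1 : phi y1 = (lam 1 y1)%:P%:P * QX k + (mu 1 y1)%:P%:P * QY k.
Proof. by rewrite (phi_hom hy1) hr1 /psi /= expr1 expr0 mul1r. Qed.

Lemma phi_Y : phi ((mu 1 y1)^-1 *: (y1 - lam 1 y1 *: x0)) = QY k.
Proof.
rewrite phiZ phiD -scaleNr phiZ phi_y1 phi_x0.
rewrite !polyCN mulNr addrC addrA addNr add0r mulrA -!polyCM mulVf //.
by rewrite !polyC1 mul1r.
Qed.

Lemma phi_surj p : exists z, cQ (phi z) p.
Proof.
pose S (p : R) := exists z, cQ (phi z) p.
have SD : forall p q, S p -> S q -> S (p + q).
  move=> p1 q1 [z1 h1] [z2 h2]; exists (z1 + z2); rewrite phiD; exact: cQ_add.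
have SM : forall p q, S p -> S q -> S (p * q).
  move=> p1 q1 [z1 h1] [z2 h2]; exists (z1 * z2).
  exact: cQ_trans (phi_mul z1 z2) (cQ_mul h1 h2).
have SC : forall c, S c%:P%:P by move=> c; exists c%:A; rewrite phi_scal; exact: cQ_refl.
have SX : S 'X by exists x0; rewrite phi_x0; exact: cQ_refl.
have SY : S ('X)%:P by exists ((mu 1 y1)^-1 *: (y1 - lam 1 y1 *: x0)); rewrite phi_Y; exact: cQ_refl.
have Sin : forall c : {poly k}, S c%:P.
  elim/poly_ind => [|q c hq]; first by have := SC 0; rewrite polyC0.
  by rewrite polyCD polyCM; apply: SD => //; apply: SM.
elim/poly_ind: p => [|q c hq]; first by have := Sin 0; rewrite polyC0.
by apply: SD => //; apply: SM.
Qed.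

Lemma construction : exists phi0 : A -> R,
  quot_hom (fun c : k => c%:P%:P) (Q_rels k r) phi0 /\ quot_hom_surj (Q_rels k r) phi0.
Proof.
exists phi; split; last exact: phi_surj.
split.
- by move=> c x y; apply: cQ_eq; apply: phi_lin.
- by apply: cQ_eq; apply: phi_one.
- exact: phi_mul.
Qed.

End Alpha.

Lemma ex_least (P : nat -> Prop) : (exists m, P m) -> exists m, P m /\ forall j, (j < m)%N -> ~ P j.
Proof.
move=> [m hm]; elim/ltn_ind: m hm => m ih hm.
case: (classic (exists j, (j < m)%N /\ P j)) => [[j [hj hPj]]|hno].
  exact: ih j hj hPj.
by exists m; split => // j hj hPj; apply: hno; exists j.
Qed.

Theorem main_thm
  (k : closedFieldType)
  (A : falgType k) (hcomm : forall x y : A, x * y = y * x)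
  (n : nat) (G : nat -> {vspace A}) (hstd : is_standard_grading n G)
  (r : nat) (hr : is_crit_deg G r) :
  exists phi : A -> {poly {poly k}},
    quot_hom (fun c : k => c%:P%:P) (Q_rels k r) phi /\
    quot_hom_surj (Q_rels k r) phi.
Proof.
have [hgr hmax [s [hs hgen']]] := hstd.
have hgen : forall x, x \in irrelevant_ideal n G -> gen_ideal s x by move=> x /hgen'.
have hG0 := G0_scalar hgr hcomm hmax.
have [[N [al [[hl h1 hm] [a' [b' [ha' hb' hind]]]]]] _] := hr.
have hlin : forall c x y i, (i <= N)%N -> (al (c *: x + y))`_i = c * (al x)`_i + (al y)`_i.
  by move=> c x y i hi; rewrite ((cm1P _ _ _).1 (hl c x y) i hi) coefD coefCM.
have hmul : forall x y i, (i <= N)%N -> (al (x * y))`_i = (al x * al y)`_i.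
  by move=> x y i hi; rewrite ((cm1P _ _ _).1 (hm x y) i hi).
have hone : forall i, (i <= N)%N -> (al 1)`_i = (1 : {poly k})`_i.
  by move=> i hi; rewrite ((cm1P _ _ _).1 h1 i hi).
have hdim : forall P : {poly k}, (forall x, x \in G r -> exists l, forall i, (i <= N)%N ->
    (al x)`_i = l * P`_i) -> False.
  move=> P hP.
  have [l1 hl1] := hP a' ha'; have [l2 hl2] := hP b' hb'.
  have [e1 e2] : l2 = 0 /\ - l1 = 0.
    apply: hind; apply/cm1P => i hi.
    by rewrite coefD !coefCM hl1 // hl2 // coef0; ring.
  have [] : (1 : k) = 0 /\ (0 : k) = 0.
    apply: hind; apply/cm1P => i hi.
    rewrite coefD !coefCM hl1 // hl2 // coef0 e1.
    by move/eqP: e2; rewrite oppr_eq0 => /eqP ->; ring.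
  by move/eqP; rewrite oner_eq0.
have hr1 : (0 < r)%N.
  case: (posnP r) => // hr0; exfalso; apply: (hdim (al 1)) => x.
  rewrite hr0 => /hG0 [c ->]; exists c => i hi; by rewrite (alZ hlin).
have hex : exists o, (o <= N)%N /\ exists y, y \in G 1 /\ (al y)`_o != 0.
  apply: NNPP => hno; apply: (hdim 0).
  have hz : forall d, (0 < d)%N -> forall x, x \in G d -> forall i, (i <= N)%N -> (al x)`_i = 0.
    apply: (grade_ind hgr hs hgen (Q := fun d x => forall i, (i <= N)%N -> (al x)`_i = 0)).
    - by move=> d i hi; exact: (al0 hlin hi).
    - by move=> d x y hx hy i hi; rewrite (alD hlin) // hx // hy // addr0.
    - move=> y hy i hi; apply/eqP; apply: NNPP => hne; apply: hno; exists i; split => //.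
      by exists y; split => //; apply/negP.
    - move=> d x y _ _ _ hx i hi; rewrite hmul // coefM big1 // => j _.
      by rewrite hx ?mul0r //; have := ltn_ord j; lia.
  by move=> x hx; exists 0 => i hi; rewrite coef0 mulr0 (hz r hr1 x hx i hi).
have [a [[ha [x0 [hx0 hW]]] hamin]] := ex_least hex.
have hlow : forall y, y \in G 1 -> forall i, (i < a)%N -> (al y)`_i = 0.
  move=> y hy i hi; apply/eqP; apply: NNPP => hne; apply: (hamin i hi); split; first lia.
  by exists y; split => //; apply/negP.
pose Good c := forall y, y \in G 1 -> exists l, forall i, (i <= N)%N -> (i < a + c)%N ->
  (al y)`_i = l * (al x0)`_i.
have hG1 : Good 1.
  move=> y hy; exists ((al y)`_a / (al x0)`_a) => i hiN hi.
  move: hi; rewrite addn1 ltnS leq_eqVlt => /orP [/eqP ->|hi]; first by rewrite divfK.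
  by rewrite (hlow y hy i hi) (hlow x0 hx0 i hi) mulr0.
have hsmall : forall b, (0 < b)%N -> Good b -> (N < r * a + b)%N -> False.
  move=> b hb hgood hNb.
  have hK := KL hgr hs hgen hlin hmul hx0 ha hW hlow hb hgood hr1.
  apply: (hdim ('X^(r * a) * V al a x0 ^+ r)) => x hx.
  have [l [m hrep]] := hK x hx; exists l => i hi.
  rewrite hrep //; last lia.
  by rewrite (E_small hs hx0 ha hW hb) //; lia.
case: (classic (forall c, Good c)) => [hall|hnall].
  by exfalso; apply: (hsmall N.+1 isT (hall N.+1)); lia.
have [c0 [hc0 hmin]] := ex_least (not_all_ex_not _ _ hnall).
have hc01 : (1 < c0)%N.
  case: c0 hc0 hmin => [|[|c0]] hc0 hmin //.
    exfalso; apply: hc0 => y hy; have [l hl0] := hG1 y hy; exists l => i hiN hi.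
    by apply: hl0 => //; lia.
set b := c0.-1.
have hb : (0 < b)%N by rewrite /b; lia.
have hgood : Good b by apply: NNPP; apply: hmin; rewrite /b; lia.
have hbad : ~ Good b.+1 by rewrite /b prednK //; lia.
have hrN : (r * a + b <= N)%N.
  by case: (leqP (r * a + b) N) => // hN; exfalso; apply: (hsmall b hb hgood hN).
have [y1 [hy1 hno1]] : exists y, y \in G 1 /\ ~ exists l, forall i, (i <= N)%N -> (i < a + b.+1)%N ->
    (al y)`_i = l * (al x0)`_i.
  apply: NNPP => H; apply: hbad => y hy; apply: NNPP => hne; apply: H; exists y; split => //.
have hm1 : mu al a b x0 1 y1 != 0.
  apply/eqP => hm0; apply: hno1; exists (lam al a x0 1 y1) => i hiN hi.
  have hN1 : (1 * a + b <= N)%N by apply: leq_trans hrN; rewrite leq_add2r leq_mul2r hr1 orbT.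
  have hrep := KL' hgr hs hgen hlin hmul hx0 ha hW hlow hb hgood hN1 isT hy1.
  rewrite hrep //; last lia.
  rewrite hm0 /E polyC0 mul0r addr0 mul1n expr1 (XaV hx0 hlow) coefMC mulrC.
  by [].
exact: (construction hgr hs hgen hlin hmul hx0 ha hW hlow hb hgood hr1 hrN hone hG0 hcomm hy1 hm1).
Qed.

Unset Implicit Arguments.

Theorem proposition2p5
  (k : closedFieldType) (hk : [pchar k] =i pred0)
  (A : falgType k) (hcomm : forall x y : A, x * y = y * x)
  (n : nat) (G : nat -> {vspace A}) (hstd : is_standard_grading n G)
  (hnpi : ~ is_principal_ideal_algebra A)
  (r : nat) (hr : is_crit_deg G r) :
  exists phi : A -> {poly {poly k}},
    quot_hom (fun c : k => c%:P%:P) (Q_rels k r) phi /\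
    quot_hom_surj (Q_rels k r) phi.
Proof.
exact: (main_thm hcomm hstd hr).
Qed.
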